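(* Let $s$ be a continuous proper scoring rule with convex exposure on an $n$-outcome forecast domain $\mathcal{D}$, with exposure function $\mathbf{g}$, and fix $\mathbf{p}_1,\dots,\mathbf{p}_m\in\mathcal{D}$. For a weight vector $\mathbf{w}=(w_1,\dots,w_m)\in\Delta^m$ and $j\in[n]$ define the weight-score \[\mathrm{WS}_j(\mathbf{w}):=s(\mathbf{p}^*_{\mathbf{w}};j),\] where $\mathbf{p}^*_{\mathbf{w}}$ is the quasi-arithmetic pool of $(\mathbf{p}_i,w_i)_{i=1}^m$ with respect to $\mathbf{g}$. Then for every $j\in[n]$, $\mathrm{WS}_j$ is a concave function of $\mathbf{w}$ on $\Delta^m$.
   Context: $\Delta^k$ is the standard simplex in $\mathbb{R}^k$ (probability vectors); $\delta_j$ is the $j$-th standard basis vector. An $n$-outcome forecast domain is a convex $(n-1)$-dimensional subset of $\Delta^n$. A proper scoring rule on $\mathcal{D}$ is $s:\mathcal{D}\times[n]\to\mathbb{R}$ with $\sum_j p(j)s(\mathbf{p};j)\ge\sum_j p(j)s(\mathbf{x};j)$ for all $\mathbf{p},\mathbf{x}\in\mathcal{D}$, equality only if $\mathbf{x}=\mathbf{p}$. $G(\mathbf{p}):=\sum_j p(j)s(\mathbf{p};j)$ is differentiable and strictly convex, $\mathbf{g}=\nabla G$ (values modulo translation by the all-ones vector), and $s(\mathbf{p};j)=G(\mathbf{p})+\langle\mathbf{g}(\mathbf{p}),\delta_j-\mathbf{p}\rangle$. Convex exposure: the range of $\mathbf{g}$ is convex. The QA pool with weights $\mathbf{w}$ is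 the unique $\mathbf{p}^*_{\mathbf{w}}\in\mathcal{D}$ with $\mathbf{g}(\mathbf{p}^*_{\mathbf{w}})=\sum_i w_i\mathbf{g}(\mathbf{p}_i)$ (modulo the all-ones vector). *)

(* Defs.v *)
From HB Require Import structures.
From mathcomp Require Import all_boot all_order all_algebra.
From mathcomp Require Import reals.
From Stdlib Require Import ClassicalEpsilon.
Set Implicit Arguments. Unset Strict Implicit. Unset Printing Implicit Defensive.
Import Order.TTheory GRing.Theory Num.Theory.
Local Open Scope ring_scope.

Section Defs.
Variable R : realType.

Definition dotv n (u v : 'rV[R]_n) : R := \sum_(j < n) u 0 j * v 0 j.
Definition l1dist n (x y : 'rV[R]_n) : R := \sum_(j < n) `|x 0 j - y 0 j|.

Definition ones n : 'rV[R]_n := const_mx 1.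
Definition delta n (j : 'I_n) : 'rV[R]_n := delta_mx 0 j.

Definition in_simplex n (x : 'rV[R]_n) : Prop :=
  (forall j, 0 <= x 0 j) /\ \sum_(j < n) x 0 j = 1.

Definition convex_set n (A : 'rV[R]_n -> Prop) : Prop :=
  forall x y (t : R), A x -> A y -> 0 <= t <= 1 -> A (t *: x + (1 - t) *: y).

Definition affinely_independent n k (q : 'I_k -> 'rV[R]_n) : Prop :=
  forall c : 'I_k -> R, \sum_(i < k) c i *: q i = 0 -> \sum_(i < k) c i = 0 ->
    forall i, c i = 0.

(* an n-outcome forecast domain: a convex subset of Delta^n of dimension n-1,
   i.e. containing n affinely independent points *)
Definition forecast_domain n (D : 'rV[R]_n -> Prop) : Prop :=
  [/\ convex_set D, (forall x, D x -> in_simplex x) &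
      exists q : 'I_n -> 'rV[R]_n, (forall i, D (q i)) /\ affinely_independent q].

Definition expected_score n (s : 'rV[R]_n -> 'I_n -> R) (p x : 'rV[R]_n) : R :=
  \sum_(j < n) p 0 j * s x j.

Definition proper_scoring_rule n (D : 'rV[R]_n -> Prop) (s : 'rV[R]_n -> 'I_n -> R) : Prop :=
  forall p x, D p -> D x ->
    expected_score s p x <= expected_score s p p /\
    (expected_score s p x = expected_score s p p -> x = p).

Definition Gfun n (s : 'rV[R]_n -> 'I_n -> R) (p : 'rV[R]_n) : R := expected_score s p p.

Definition continuous_on n (D : 'rV[R]_n -> Prop) (f : 'rV[R]_n -> R) : Prop :=
  forall p, D p -> forall e : R, 0 < e -> exists2 d : R, 0 < d &
    forall x, D x -> l1dist x p < d -> `|f x - f p| < e.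

Definition continuous_scoring_rule n (D : 'rV[R]_n -> Prop) (s : 'rV[R]_n -> 'I_n -> R) : Prop :=
  forall j, continuous_on D (fun p => s p j).

(* g(p) is a gradient of G at every p in D (relative to D; hence determined
   only modulo the all-ones vector) *)
Definition gradient_on n (D : 'rV[R]_n -> Prop) (G : 'rV[R]_n -> R)
    (g : 'rV[R]_n -> 'rV[R]_n) : Prop :=
  forall p, D p -> forall e : R, 0 < e -> exists2 d : R, 0 < d &
    forall x, D x -> l1dist x p < d ->
      `|G x - G p - dotv (g p) (x - p)| <= e * l1dist x p.

Definition strictly_convex_on n (D : 'rV[R]_n -> Prop) (G : 'rV[R]_n -> R) : Prop :=
  forall x y (t : R), D x -> D y -> x <> y -> 0 < t < 1 ->
    G (t *: x + (1 - t) *: y) < t * G x + (1 - t) * G y.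

Definition exposure_function n (D : 'rV[R]_n -> Prop) (s : 'rV[R]_n -> 'I_n -> R)
    (g : 'rV[R]_n -> 'rV[R]_n) : Prop :=
  gradient_on D (Gfun s) g /\
  forall p j, D p -> s p j = Gfun s p + dotv (g p) (delta j - p).

Definition convex_exposure n (D : 'rV[R]_n -> Prop) (g : 'rV[R]_n -> 'rV[R]_n) : Prop :=
  convex_set (fun v => exists p (c : R), D p /\ v = g p + c *: ones n).

Definition is_qa_pool n m (D : 'rV[R]_n -> Prop) (g : 'rV[R]_n -> 'rV[R]_n)
    (ps : 'I_m -> 'rV[R]_n) (w : 'rV[R]_m) (q : 'rV[R]_n) : Prop :=
  D q /\ exists c : R, g q = \sum_(i < m) w 0 i *: g (ps i) + c *: ones n.

(* the QA pool p*_w (the unique such point, chosen by description) *)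
Definition qa_pool n m (D : 'rV[R]_n -> Prop) (g : 'rV[R]_n -> 'rV[R]_n)
    (ps : 'I_m -> 'rV[R]_n) (w : 'rV[R]_m) : 'rV[R]_n :=
  epsilon (inhabits (0 : 'rV[R]_n)) (is_qa_pool D g ps w).

Definition weight_score n m (D : 'rV[R]_n -> Prop) (s : 'rV[R]_n -> 'I_n -> R)
    (g : 'rV[R]_n -> 'rV[R]_n) (ps : 'I_m -> 'rV[R]_n) (j : 'I_n) (w : 'rV[R]_m) : R :=
  s (qa_pool D g ps w) j.

Definition concave_on_simplex m (f : 'rV[R]_m -> R) : Prop :=
  forall w1 w2 (t : R), in_simplex w1 -> in_simplex w2 -> 0 <= t <= 1 ->
    t * f w1 + (1 - t) * f w2 <= f (t *: w1 + (1 - t) *: w2).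

End Defs.

(* Main.v *)
Require Import Defs.
From HB Require Import structures.
From mathcomp Require Import all_boot all_order all_algebra.
From mathcomp Require Import reals.
From mathcomp Require Import ring lra.
From Stdlib Require Import ClassicalEpsilon.
Set Implicit Arguments. Unset Strict Implicit. Unset Printing Implicit Defensive.
Import Order.TTheory GRing.Theory Num.Theory.
Local Open Scope ring_scope.

Lemma convex_comb (R : realType) n (S : 'rV[R]_n -> Prop) : convex_set S ->
  forall m (a : 'I_m -> 'rV_n) (w : 'I_m -> R), (forall i, S (a i)) ->
  (forall i, 0 <= w i) -> \sum_i w i = 1 -> S (\sum_i w i *: a i).
Proof.
move=> cS; elim=> [|m IH] a w Sa w0 w1.
  by move: w1; rewrite big_ord0 => /eqP; rewrite eq_sym oner_eq0.
rewrite big_ord_recl; move: w1; rewrite big_ord_recl => w1.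
set r := \sum_(i < m) w (lift ord0 i) in w1.
have r0 : 0 <= r by apply: sumr_ge0 => i _.
have [r_eq0 | r_neq0] := eqVneq r 0.
  have wi0 : forall i, w (lift ord0 i) = 0.
    by move=> i; apply: (psumr_eq0P _ r_eq0) => // k _.
  rewrite big1 ?addr0; last by move=> i _; rewrite wi0 scale0r.
  have -> : w ord0 = 1 by rewrite r_eq0 addr0 in w1.
  by rewrite scale1r; exact: Sa.
have HS : S (\sum_(i<m) (w (lift ord0 i) / r) *: a (lift ord0 i)).
  apply: IH => //.
    by move=> i; apply: divr_ge0.
  by rewrite -mulr_suml mulfV.
have t01 : 0 <= w ord0 <= 1 by apply/andP; split; [exact: w0| lra].
have := cS _ _ (w ord0) (Sa ord0) HS t01.
have -> : 1 - w ord0 = r by lra.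
rewrite scaler_sumr; congr S; congr (_ + _); apply: eq_bigr => i _.
by rewrite scalerA mulrCA mulfV // mulr1.
Qed.

Section Main.
Variable R : realType.
Variable n : nat.

Lemma dotvBr (u x y : 'rV[R]_n) : dotv u (x - y) = dotv u x - dotv u y.
Proof. by rewrite /dotv -sumrB; apply: eq_bigr => k _; rewrite !mxE mulrBr. Qed.

Lemma dotv_delta (u : 'rV[R]_n) j : dotv u (delta R j) = u 0 j.
Proof.
rewrite /dotv (bigD1 j) //= !mxE !eqxx /= mulr1 big1 ?addr0 // => k /negbTE kj.
by rewrite !mxE kj mulr0.
Qed.

Lemma sum_delta j : \sum_k (delta R j : 'rV[R]_n) 0 k = 1.
Proof.
rewrite (bigD1 j) //= !mxE !eqxx /= big1 ?addr0 // => k /negbTE kj.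
by rewrite !mxE kj.
Qed.

Lemma exp_lin (s : 'rV[R]_n -> 'I_n -> R) g (x p : 'rV[R]_n) :
  (forall j, s p j = Gfun s p + dotv (g p) (delta R j - p)) ->
  \sum_j x 0 j = 1 ->
  expected_score s x p = Gfun s p + dotv (g p) (x - p).
Proof.
move=> sp sx; rewrite /expected_score.
under eq_bigr do rewrite sp dotvBr dotv_delta.
rewrite dotvBr.
have -> : \sum_i x 0 i * (Gfun s p + (g p 0 i - dotv (g p) p)) =
  Gfun s p * (\sum_i x 0 i) + dotv (g p) x - dotv (g p) p * (\sum_i x 0 i).
  rewrite /dotv !mulr_sumr -big_split -sumrB /=; apply: eq_bigr => i _; ring.
by rewrite sx !mulr1; ring.
Qed.

End Main.

Theorem theorem5p1 (R : realType) (n m : nat) (D : 'rV[R]_n -> Prop)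
    (s : 'rV[R]_n -> 'I_n -> R) (g : 'rV[R]_n -> 'rV[R]_n)
    (ps : 'I_m -> 'rV[R]_n) :
  forecast_domain D ->
  proper_scoring_rule D s ->
  continuous_scoring_rule D s ->
  strictly_convex_on D (Gfun s) ->
  exposure_function D s g ->
  convex_exposure D g ->
  (forall i, D (ps i)) ->
  forall j : 'I_n, concave_on_simplex (weight_score D s g ps j).
Proof.
move=> [cD Dsimp _] prop _ _ [_ sdef] cexp Dps j w1 w2 t Hw1 Hw2 t01.
have pool : forall w, in_simplex w -> is_qa_pool D g ps w (qa_pool D g ps w).
  move=> w [wpos wsum]; rewrite /qa_pool; apply: epsilon_spec.
  have := @convex_comb R n _ cexp m (fun i => g (ps i)) (fun i => w 0 i).
  case.
  - by move=> i; exists (ps i), 0; rewrite scale0r addr0.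
  - exact: wpos.
  - exact: wsum.
  move=> p [c [Dp E]]; exists p; split => //; exists (- c).
  by rewrite E scaleNr addrK.
have sup : forall x p, D x -> D p ->
    Gfun s p + dotv (g p) (x - p) <= Gfun s x.
  move=> x p Dx Dp; have := (prop x p Dx Dp).1.
  rewrite (exp_lin (g := g)) //; last by case: (Dsimp _ Dx).
  by move=> k; apply: sdef.
have Hw : in_simplex (t *: w1 + (1 - t) *: w2).
  case: Hw1 => [p1 s1]; case: Hw2 => [p2 s2]; case/andP: t01 => t0 t1; split.
    move=> k; rewrite !mxE; apply: addr_ge0; apply: mulr_ge0 => //; lra.
  under eq_bigr do rewrite !mxE.
  rewrite big_split /= -!mulr_sumr s1 s2; ring.
rewrite /weight_score.
set q := qa_pool D g ps (t *: w1 + (1 - t) *: w2).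
set q1 := qa_pool D g ps w1.
set q2 := qa_pool D g ps w2.
have [Dq [c Hc]] := pool _ Hw.
have [Dq1 [c1 Hc1]] := pool _ Hw1.
have [Dq2 [c2 Hc2]] := pool _ Hw2.
rewrite -/q in Dq Hc; rewrite -/q1 in Dq1 Hc1; rewrite -/q2 in Dq2 Hc2.
have E : forall k, g q 0 k = t * g q1 0 k + (1 - t) * g q2 0 k
    + (c - t * c1 - (1 - t) * c2).
  move=> k; rewrite Hc Hc1 Hc2 !mxE !summxE.
  under eq_bigr do rewrite !mxE.
  under [in RHS]eq_bigr do rewrite !mxE.
  under [X in _ = _ + _ * (X + _) + _]eq_bigr do rewrite !mxE.
  have -> : \sum_i (t * w1 0 i + (1 - t) * w2 0 i) * g (ps i) 0 k =
     t * (\sum_i w1 0 i * g (ps i) 0 k) + (1 - t) * (\sum_i w2 0 i * g (ps i) 0 k).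
    by rewrite !mulr_sumr -big_split /=; apply: eq_bigr => i _; ring.
  ring.
have dq : forall y : 'rV[R]_n, \sum_k y 0 k = 0 ->
    dotv (g q) y = t * dotv (g q1) y + (1 - t) * dotv (g q2) y.
  move=> y y0; rewrite /dotv; under eq_bigr do rewrite E.
  rewrite !mulr_sumr -big_split /=.
  have -> : \sum_i (t * g q1 0 i + (1 - t) * g q2 0 i + (c - t * c1 - (1 - t) * c2)) * y 0 i
     = \sum_i (t * (g q1 0 i * y 0 i) + (1 - t) * (g q2 0 i * y 0 i))
       + (c - t * c1 - (1 - t) * c2) * \sum_i y 0 i.
    rewrite mulr_sumr -big_split /=; apply: eq_bigr => i _; ring.
  by rewrite y0 mulr0 addr0.
have sumq : \sum_k (delta R j - q) 0 k = 0.
  have e : forall k, (delta R j - q) 0 k = (delta R j) 0 k - q 0 k.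
    by move=> k; rewrite !mxE.
  under eq_bigr do rewrite e.
  rewrite sumrB sum_delta.
  by case: (Dsimp _ Dq) => _ ->; rewrite subrr.
rewrite (sdef q j Dq) (sdef q1 j Dq1) (sdef q2 j Dq2) (dq _ sumq).
have S1 := sup q q1 Dq Dq1.
have S2 := sup q q2 Dq Dq2.
have e1 : dotv (g q1) (delta R j - q1) = dotv (g q1) (delta R j - q) + dotv (g q1) (q - q1).
  by rewrite !dotvBr; ring.
have e2 : dotv (g q2) (delta R j - q2) = dotv (g q2) (delta R j - q) + dotv (g q2) (q - q2).
  by rewrite !dotvBr; ring.
rewrite e1 e2.
case/andP: t01 => t0 t1.
have h1 : 0 <= t * (Gfun s q - (Gfun s q1 + dotv (g q1) (q - q1))).
  by apply: mulr_ge0 => //; rewrite subr_ge0.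
have h2 : 0 <= (1 - t) * (Gfun s q - (Gfun s q2 + dotv (g q2) (q - q2))).
  by apply: mulr_ge0; [rewrite subr_ge0 | rewrite subr_ge0].
move: h1 h2.
generalize (Gfun s q) (Gfun s q1) (Gfun s q2) (dotv (g q1) (q - q1))
  (dotv (g q2) (q - q2)) (dotv (g q1) (delta R j - q)) (dotv (g q2) (delta R j - q)).
move=> a b c' d e f h h1 h2.
rewrite -subr_ge0.
have -> : a + (t * f + (1 - t) * h) - (t * (b + (f + d)) + (1 - t) * (c' + (h + e))) =
  t * (a - (b + d)) + (1 - t) * (a - (c' + e)) by ring.
exact: addr_ge0.
Qed.
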